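(* Let $k\ge2$, $n\ge1$ be integers, let $\bar{\mathcal{P}}\in\mathbb{R}^{[k,n]}$ be a columnwise-substochastic tensor, $\mathbf{v}\in\mathbb{R}^n$ a stochastic vector and $\alpha\in[0,1)$. Let $\Delta:=\{\mathbf{y}\in\mathbb{R}^n_+:\mathbf{e}^T\mathbf{y}\le(1-\alpha)^{-\frac{1}{k-1}}\}$ and $\Phi(\mathbf{y}):=(1+\alpha\mathbf{e}^T(\bar{\mathcal{P}}\mathbf{y}^{k-1}))^{-\frac{k-2}{k-1}}(\mathbf{v}+\alpha\bar{\mathcal{P}}\mathbf{y}^{k-1})$. Define $\varsigma:=(2k-3)\alpha(1-\alpha)^{-\frac{k-2}{k-1}}$. If $\varsigma<1$, then $\Phi$ maps $\Delta$ into $\Delta$ and is a contraction on $\Delta$, i.e., $\|\Phi(\mathbf{x})-\Phi(\mathbf{y})\|_1\le\varsigma\|\mathbf{x}-\mathbf{y}\|_1$ for all $\mathbf{x},\mathbf{y}\in\Delta$.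
   Context: For $\mathcal{P}\in\mathbb{R}^{[k,n]}$ (real tensors of order $k$, dimension $n$) and $\mathbf{y}\in\mathbb{R}^n$, $(\mathcal{P}\mathbf{y}^{k-1})_i=\sum_{i_2,\dots,i_k}p_{i i_2\dots i_k}y_{i_2}\cdots y_{i_k}$. $\bar{\mathcal{P}}$ is columnwise-substochastic if its entries are nonnegative and $\sum_{i}\bar p_{i i_2\dots i_k}\le1$ for all $i_2,\dots,i_k$. $\mathbf{e}$ is the all-ones vector; a stochastic vector is nonnegative with entries summing to $1$. *)

(* Defs.v *)
From HB Require Import structures.
From mathcomp Require Import all_boot all_order all_algebra.
From mathcomp Require Import reals exp.
Set Implicit Arguments. Unset Strict Implicit. Unset Printing Implicit Defensive.
Import Order.TTheory GRing.Theory Num.Theory.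
Local Open Scope ring_scope.

(* A real tensor of order k and dimension n: entry p_{i i_2 ... i_k} is
   P i t where t : {ffun 'I_(k.-1) -> 'I_n} encodes (i_2,...,i_k). *)
Definition tensor (R : realType) (k n : nat) :=
  'I_n -> {ffun 'I_k.-1 -> 'I_n} -> R.

Definition tapply (R : realType) (k n : nat) (P : tensor R k n) (y : 'I_n -> R)
  : 'I_n -> R :=
  fun i => \sum_(t : {ffun 'I_k.-1 -> 'I_n}) P i t * \prod_(j < k.-1) y (t j).

Definition col_substochastic (R : realType) (k n : nat) (P : tensor R k n) :=
  (forall i t, 0 <= P i t) /\ (forall t, \sum_(i < n) P i t <= 1).

Definition stochastic (R : realType) (n : nat) (v : 'I_n -> R) :=
  (forall i, 0 <= v i) /\ \sum_(i < n) v i = 1.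

Definition esum (R : realType) (n : nat) (y : 'I_n -> R) := \sum_(i < n) y i.

Definition norm1 (R : realType) (n : nat) (y : 'I_n -> R) := \sum_(i < n) `|y i|.

Definition Delta (R : realType) (k n : nat) (alpha : R) (y : 'I_n -> R) :=
  (forall i, 0 <= y i) /\
  esum y <= powR (1 - alpha) (- (1 / (k%:R - 1))).

Definition Phi (R : realType) (k n : nat) (P : tensor R k n) (v : 'I_n -> R)
  (alpha : R) (y : 'I_n -> R) : 'I_n -> R :=
  fun i => powR (1 + alpha * esum (tapply P y)) (- ((k%:R - 2) / (k%:R - 1)))
           * (v i + alpha * tapply P y i).

Definition varsigma (R : realType) (k : nat) (alpha : R) :=
  (2 * k%:R - 3) * alpha * powR (1 - alpha) (- ((k%:R - 2) / (k%:R - 1))).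

(* Main.v *)
Require Import Defs.
From HB Require Import structures.
From mathcomp Require Import all_boot all_order all_algebra.
From mathcomp Require Import reals exp ring lra.
From mathcomp Require Import sequences.
Import Order.TTheory GRing.Theory Num.Theory.
Local Open Scope ring_scope.

Section Aux.
Variable R : realType.

Lemma eq_le_tmp (a b : R) : a = b -> a <= b.
Proof. by move->. Qed.

Lemma telesc m (a b : 'I_m -> R) :
  \prod_(j < m) a j - \prod_(j < m) b j =
  \sum_(l < m) \prod_(j < m)
     (if (j < l)%N then a j else if (j == l :> nat) then a j - b j else b j).
Proof.
elim: m a b => [|m IH] a b; first by rewrite !big_ord0 subrr.
rewrite [\prod_(j < m.+1) a j]big_ord_recr [\prod_(j < m.+1) b j]big_ord_recr.
rewrite [in RHS]big_ord_recr /=.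
have E1 : forall l : 'I_m,
   \prod_(j < m.+1) (if (j < l)%N then a j
      else if (j == l :> nat) then a j - b j else b j)
   = (\prod_(j < m) (if (j < l)%N then a (widen_ord (leqnSn m) j)
      else if (j == l :> nat) then a (widen_ord (leqnSn m) j) - b (widen_ord (leqnSn m) j)
      else b (widen_ord (leqnSn m) j))) * b ord_max.
  move=> l; rewrite big_ord_recr /=.
  have l_lt := ltn_ord l.
  by rewrite ltnNge (ltnW l_lt) /= gtn_eqF.
rewrite (eq_bigr _ (fun l _ => E1 l)).
rewrite -big_distrl /= -IH.
have E2 : \prod_(j < m.+1) (if (j < m)%N then a j
      else if (j == m :> nat) then a j - b j else b j)
   = (\prod_(j < m) a (widen_ord (leqnSn m) j)) * (a ord_max - b ord_max).
  rewrite big_ord_recr /= ltnn eqxx; congr (_ * _).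
  by apply: eq_bigr => j _; rewrite /= ltn_ord.
rewrite E2; ring.
Qed.

Lemma leE' (a b : R) : a = b -> a <= b.
Proof. by move->. Qed.

Lemma prod_diff_bound m n (x y : 'I_n -> R) B :
  (forall i, 0 <= x i) -> (forall i, 0 <= y i) -> 0 <= B ->
  \sum_i x i <= B -> \sum_i y i <= B ->
  \sum_(t : {ffun 'I_m -> 'I_n}) `|\prod_(j < m) x (t j) - \prod_(j < m) y (t j)|
   <= m%:R * B ^+ m.-1 * \sum_i `|x i - y i|.
Proof.
move=> x0 y0 B0 xB yB.
pose F (l j : 'I_m) i := if (j < l)%N then x i
   else if (j == l :> nat) then `|x i - y i| else y i.
have F0 : forall l j i, 0 <= F l j i.
  by move=> l j i; rewrite /F; case: ifP => _ //; case: ifP.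
apply: (@le_trans _ _ (\sum_(t : {ffun 'I_m -> 'I_n}) \sum_(l < m) \prod_(j < m) F l j (t j))).
  apply: ler_sum => t _; rewrite telesc.
  apply: le_trans (ler_norm_sum _ _ _) _; apply: ler_sum => l _.
  rewrite normr_prod; apply: leE'; apply: eq_bigr => j _; rewrite /F.
  case: ifP => _; first by rewrite ger0_norm.
  by case: ifP => _ //; rewrite ger0_norm.
rewrite exchange_big /=.
have E : forall l : 'I_m, \sum_(t : {ffun 'I_m -> 'I_n}) \prod_(j < m) F l j (t j)
   = \prod_(j < m) \sum_(i < n) F l j i.
  by move=> l; rewrite bigA_distr_bigA.
rewrite (eq_bigr _ (fun l _ => E l)).
set N := \sum_i `|x i - y i|.
have N0 : 0 <= N by apply: sumr_ge0 => i _.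
apply: (@le_trans _ _ (\sum_(l < m) (N * B ^+ m.-1))); last first.
  by rewrite sumr_const card_ord -mulr_natl; apply: leE'; ring.
apply: ler_sum => l _.
apply: (@le_trans _ _ (\prod_(j < m) (if j == l then N else B))).
  apply: ler_prod => j _; rewrite sumr_ge0 //=.
  rewrite /F; case: (ltngtP j l) => Hjl; rewrite -val_eqE /=.
  - by rewrite (ltn_eqF Hjl).
  - by rewrite (gtn_eqF Hjl).
  - by rewrite Hjl eqxx.
rewrite (bigD1 l) //= eqxx; apply: leE'; congr (_ * _).
rewrite (eq_bigr (fun _ => B)); last by move=> j /negPf ->.
by rewrite prodr_const cardC1 card_ord.
Qed.

Lemma powRE (a x : R) : 0 < a -> powR a x = expR (x * ln a).
Proof. by move=> a0; rewrite /powR gt_eqF. Qed.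

Lemma key_ineq (u w p : R) : 1 <= u -> u <= w -> 0 <= p ->
  (powR u (- p) - powR w (- p)) * u <= p * (w - u).
Proof.
move=> u1 uw p0.
have u0 : 0 < u by apply: lt_le_trans u1.
have w0 : 0 < w by apply: lt_le_trans uw.
rewrite !powRE //.
set a := ln u; set b := ln w.
have a0 : 0 <= a by apply: ln_ge0.
have ba : b - a = ln (w / u) by rewrite ln_div.
have lnb : ln (w / u) <= w / u - 1.
  have e : 1 + (w / u - 1) = w / u by ring.
  have := @le_ln1Dx R (w / u - 1); rewrite e; apply.
  rewrite ltrBrDl subrr divr_gt0 //.
have E : expR (- p * a) - expR (- p * b) = expR (- p * a) * (1 - expR (- (p * (b - a)))).
  by rewrite mulrBr mulr1 -expRD; congr (_ - expR _); ring.
rewrite E.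
have h1 : 1 - expR (- (p * (b - a))) <= p * (b - a).
  have := expR_ge1Dx (- (p * (b - a))); lra.
have ea0 : 0 <= expR (- p * a) := expR_ge0 _.
have ea1 : expR (- p * a) <= 1.
  by rewrite expR_le1 mulNr oppr_le0 mulr_ge0.
have h2 : p * (b - a) <= p * (w / u - 1) by rewrite ba ler_wpM2l.
have h3 : p * (w / u - 1) * u = p * (w - u).
  by rewrite -mulrA mulrBl divfK ?gt_eqF // mul1r.
have h4 : 0 <= p * (w - u) by rewrite mulr_ge0 // subr_ge0.
apply: (@le_trans _ _ (expR (- p * a) * (p * (w / u - 1)) * u)).
  apply: ler_wpM2r; first exact: ltW.
  apply: ler_wpM2l => //; exact: le_trans h1 h2.
rewrite -mulrA h3; apply: le_trans (ler_wpM2r h4 ea1) _; by rewrite mul1r.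
Qed.

Lemma tapply_ge0 k n (P : tensor R k n) y i :
  col_substochastic P -> (forall i, 0 <= y i) -> 0 <= tapply P y i.
Proof.
move=> [P0 _] y0; apply: sumr_ge0 => t _; apply: mulr_ge0 => //.
by apply: prodr_ge0 => j _.
Qed.

Lemma esum_tapply k n (P : tensor R k n) y :
  col_substochastic P -> (forall i, 0 <= y i) ->
  esum (tapply P y) <= esum y ^+ k.-1.
Proof.
move=> [P0 P1] y0; rewrite /esum /tapply exchange_big /=.
have -> : (\sum_(i < n) y i) ^+ k.-1 = \prod_(j < k.-1) \sum_(i < n) y i.
  by rewrite prodr_const card_ord.
rewrite bigA_distr_bigA /=; apply: ler_sum => t _.
rewrite -big_distrl /=; apply: ler_piMl; first by apply: prodr_ge0.
exact: P1.
Qed.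

Lemma norm1_tapply k n (P : tensor R k n) x y :
  col_substochastic P ->
  norm1 (fun i => tapply P x i - tapply P y i) <=
  \sum_(t : {ffun 'I_k.-1 -> 'I_n}) `|\prod_(j < k.-1) x (t j) - \prod_(j < k.-1) y (t j)|.
Proof.
move=> [P0 P1]; rewrite /norm1 /tapply.
apply: (@le_trans _ _ (\sum_(i < n) \sum_(t : {ffun 'I_k.-1 -> 'I_n})
   P i t * `|\prod_(j < k.-1) x (t j) - \prod_(j < k.-1) y (t j)|)).
  apply: ler_sum => i _; rewrite -sumrB.
  apply: le_trans (ler_norm_sum _ _ _) _; apply: ler_sum => t _.
  by rewrite -mulrBr normrM ger0_norm.
rewrite exchange_big /=; apply: ler_sum => t _.
rewrite -big_distrl /=; apply: ler_piMl => //.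
Qed.

Lemma norm1_sym n (a b : 'I_n -> R) :
  norm1 (fun i => a i - b i) = norm1 (fun i => b i - a i).
Proof. by apply: eq_bigr => i _; rewrite distrC. Qed.
End Aux.

Theorem theorem3p10 (R : realType) (k n : nat) (P : tensor R k n)
  (v : 'I_n -> R) (alpha : R) :
  (2 <= k)%N -> (1 <= n)%N ->
  col_substochastic P -> stochastic v -> 0 <= alpha < 1 ->
  varsigma k alpha < 1 ->
  (forall y, Delta k alpha y -> Delta k alpha (Phi P v alpha y)) /\
  (forall x y, Delta k alpha x -> Delta k alpha y ->
     norm1 (fun i => Phi P v alpha x i - Phi P v alpha y i)
       <= varsigma k alpha * norm1 (fun i => x i - y i)).
Proof.
move=> k2 n1 HP [v0 v1] /andP[a0 a1] _.
have [m km] : exists m, k = m.+1 by exists k.-1; rewrite prednK // (leq_trans _ k2).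
have m1 : (1 <= m)%N by move: k2; rewrite km.
have Ek1 : k%:R - 1 = m%:R :> R by rewrite km -natr1 addrK.
have Ek2 : k%:R - 2 = m%:R - 1 :> R by rewrite km -natr1; ring.
have Em1 : (m.-1)%:R = m%:R - 1 :> R by rewrite -{2}(prednK m1) -natr1 addrK.
have mpos : 0 < m%:R :> R by rewrite ltr0n.
have mne0 : m%:R != 0 :> R by rewrite gt_eqF.
have km1 : k.-1 = m by rewrite km.
set c := 1 - alpha.
have c0 : 0 < c by rewrite subr_gt0.
set beta := expR (- (1 / m%:R) * ln c).
have beta0 : 0 <= beta := expR_ge0 _.
have Beta : powR c (- (1 / (k%:R - 1))) = beta by rewrite Ek1 powRE // mulNr.
have Bm : beta ^+ m = c^-1.
  rewrite /beta -expRM_natl.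
  have -> : m%:R * (- (1 / m%:R) * ln c) = - ln c by field.
  by rewrite expRN lnK // posrE.
have Bm1 : beta ^+ m.-1 = powR c (- ((k%:R - 2) / (k%:R - 1))).
  rewrite powRE // Ek1 Ek2 /beta -expRM_natl Em1; by congr expR; field.
rewrite /Delta -/c Beta.
have sbound : forall y, (forall i, 0 <= y i) -> esum y <= beta ->
    esum (tapply P y) <= c^-1.
  move=> y y0 yB; apply: le_trans (@esum_tapply _ _ _ _ _ HP y0) _.
  rewrite km1 -Bm; apply: lerXn2r => //; rewrite nnegrE //.
  by apply: sumr_ge0.
have s0 : forall y, (forall i, 0 <= y i) -> 0 <= esum (tapply P y).
  by move=> y y0; apply: sumr_ge0 => i _; apply: tapply_ge0.
split.
  move=> y [y0 yB]; split.
    move=> i; rewrite /Phi; apply: mulr_ge0; first exact: powR_ge0.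
    apply: addr_ge0 => //; apply: mulr_ge0 => //; exact: tapply_ge0.
  have sy := sbound y y0 yB; have sy0 := s0 y y0.
  rewrite {1}/esum /Phi -big_distrr /= big_split /=.
  rewrite -big_distrr /=.
  have -> : \sum_(i < n) v i = 1 by exact: v1.
  set s := esum (tapply P y).
  have -> : \sum_(i < n) tapply P y i = s by [].
  set u := 1 + alpha * s.
  have u1 : 1 <= u by rewrite /u lerDl mulr_ge0.
  have u0 : 0 < u by apply: lt_le_trans u1.
  have sc : s * c <= 1.
    by rewrite -(mulVf (lt0r_neq0 c0)); apply: ler_wpM2r => //; exact: ltW.
  have uc : u * c <= 1 by rewrite /u /c; rewrite /c in sc; nra.
  have luc : ln u + ln c <= 0 by rewrite -lnM ?posrE // ln_le0.
  rewrite Ek1 Ek2 powRE // {2}(_ : u = expR (ln u)); last by rewrite lnK // posrE.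
  rewrite -expRD ler_expR -subr_le0.
  have -> : - ((m%:R - 1) / m%:R) * ln u + ln u - - (1 / m%:R) * ln c
     = (ln u + ln c) * m%:R^-1 by field.
  by apply: mulr_le0_ge0 => //; rewrite invr_ge0 ltW.
move=> x y [x0 xB] [y0 yB].
wlog hs : x y x0 xB y0 yB / esum (tapply P y) <= esum (tapply P x).
  move=> W; case: (lerP (esum (tapply P y)) (esum (tapply P x))) => h.
    exact: W.
  rewrite (@norm1_sym _ _ (Phi P v alpha x)) (@norm1_sym _ _ x); apply: W => //.
  exact: ltW.
set N := norm1 (fun i => x i - y i).
set D := norm1 (fun i => tapply P x i - tapply P y i).
have D0 : 0 <= D by apply: sumr_ge0 => i _.
have HD : D <= m%:R * beta ^+ m.-1 * N.
  apply: le_trans (@norm1_tapply _ _ _ P x y HP) _; rewrite km1.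
  exact: prod_diff_bound.
set sx := esum (tapply P x); set sy := esum (tapply P y).
have sx0 := s0 x x0; have sy0 := s0 y y0.
have sxy : sx - sy <= D.
  rewrite /sx /sy /esum -sumrB; apply: ler_sum => i _; exact: ler_norm.
pose q : R := (k%:R - 2) / (k%:R - 1).
have q0 : 0 <= q by rewrite /q Ek1 Ek2 divr_ge0 // subr_ge0 ler1n.
set ux := 1 + alpha * sx; set uy := 1 + alpha * sy.
have uy1 : 1 <= uy by rewrite /uy lerDl mulr_ge0.
have uxy : uy <= ux by rewrite /ux /uy lerD2l ler_wpM2l.
have ux1 : 1 <= ux by apply: le_trans uxy.
have uy0 : 0 < uy by apply: lt_le_trans uy1.
have ux0 : 0 < ux by apply: lt_le_trans ux1.
set gx := powR ux (- q); set gy := powR uy (- q).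
have gx0 : 0 <= gx := powR_ge0 _ _.
have gx1 : gx <= 1.
  by rewrite /gx powRE // expR_le1 mulNr oppr_le0 mulr_ge0 // ln_ge0.
have gxy : gx <= gy.
  rewrite /gx /gy !powRE // ler_expR !mulNr lerN2 ler_wpM2l //.
  by rewrite ler_ln ?posrE.
have key := @key_ineq _ _ _ _ uy1 uxy q0.
rewrite -/gx -/gy in key.
have step1 : norm1 (fun i => Phi P v alpha x i - Phi P v alpha y i)
    <= gx * (alpha * D) + (gy - gx) * uy.
  rewrite /norm1 /Phi -/sx -/sy -/ux -/uy -/gx -/gy.
  apply: (@le_trans _ _ (\sum_(i < n) (gx * (alpha * `|tapply P x i - tapply P y i|)
      + (gy - gx) * (v i + alpha * tapply P y i)))).
    apply: ler_sum => i _.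
    have -> : gx * (v i + alpha * tapply P x i) - gy * (v i + alpha * tapply P y i)
       = gx * (alpha * (tapply P x i - tapply P y i))
         + (gx - gy) * (v i + alpha * tapply P y i) by ring.
    apply: le_trans (ler_normD _ _) _.
    have w0 : 0 <= v i + alpha * tapply P y i.
      by apply: addr_ge0 => //; apply: mulr_ge0 => //; apply: tapply_ge0.
    rewrite !normrM (ger0_norm gx0) (ger0_norm a0) (distrC gx) (ger0_norm w0).
    by rewrite (@ger0_norm _ (gy - gx)) // subr_ge0.
  apply: leE'.
  rewrite big_split /= -!big_distrr /= big_split /= -big_distrr /= v1.
  by rewrite /D /uy /sy /norm1 /esum.
apply: le_trans step1 _.
have t1 : gx * (alpha * D) <= alpha * D.
  by rewrite -[leRHS]mul1r; apply: ler_wpM2r => //; apply: mulr_ge0.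
have t2 : (gy - gx) * uy <= q * alpha * D.
  apply: le_trans key _; rewrite -mulrA; apply: ler_wpM2l => //.
  have -> : ux - uy = alpha * (sx - sy) by rewrite /ux /uy; ring.
  by apply: ler_wpM2l.
have t4 : alpha * (1 + q) * D <= alpha * (1 + q) * (m%:R * beta ^+ m.-1 * N).
  by apply: ler_wpM2l => //; apply: mulr_ge0 => //; apply: addr_ge0.
have t5 : alpha * (1 + q) * (m%:R * beta ^+ m.-1 * N) = varsigma k alpha * N.
  rewrite /varsigma -/c Bm1 /q Ek1 Ek2 km -natr1.
  by field.
rewrite -t5.
apply: le_trans _ t4.
have -> : alpha * (1 + q) * D = alpha * D + q * alpha * D by ring.
exact: lerD.
Qed.
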